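(* Assume $g$ satisfies (Hg), and let $k>0$, $(a,d)\in\mathcal H$. Then the following are equivalent: (i) $(a,d)\in\mathcal D^-(k)$; (ii) there exists $A\in(a,1)$ with $$\max_{v\in[0,A]}\big(d(k+1)v-dkA-g(v;a)\big)<0.$$
   Context: Let $\mathcal H=(0,1)\times(0,\infty)$. A function $g:\mathbb R\times[0,1]\to\mathbb R$, $(u,a)\mapsto g(u;a)$, satisfies (Hg) if it is $C^1$ and for every $a\in(0,1)$: $g(0;a)=g(a;a)=g(1;a)=0$, $g'(0;a)<0$, $g'(1;a)<0$, $g'(a;a)>0$ (where $g'=\partial_u g$), $g(v;a)>0$ for $v\in(-\infty,0)\cup(a,1)$ and $g(v;a)<0$ for $v\in(0,a)\cup(1,\infty)$. For $A\in(0,1)$ let $d^\diamond(A;a)=\inf\{d>0:\ d(k+1)(A-v)-g(A;a)\ge -g(v;a)\ \text{for all }v\in[0,A]\}$ and $$\mathcal D^-(k)=\Big\{(a,d)\in\mathcal H:\ d^\diamond(A;a)<d<\frac{g(A;a)}{A}\ \text{for some }A\in(a,1)\Big\}.$$ *)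

(* Defs.v *)
From Stdlib Require Import Reals Lra.
From Coquelicot Require Import Coquelicot.
Open Scope R_scope.

(* g(u;a) is written  g u a. *)

Definition cont_on_strip (f : R -> R -> R) : Prop :=
  forall u a, 0 <= a <= 1 ->
  forall eps, 0 < eps -> exists delta, 0 < delta /\
    forall u' a', 0 <= a' <= 1 -> Rabs (u' - u) < delta -> Rabs (a' - a) < delta ->
      Rabs (f u' a' - f u a) < eps.

(* g is C^1 on R x [0,1]: both partial derivatives exist (the one in a
   relative to [0,1], i.e. one-sided at the endpoints) and are jointly
   continuous on R x [0,1]. *)
Definition C1_strip (g : R -> R -> R) : Prop :=
  exists gu ga : R -> R -> R,
    cont_on_strip gu /\ cont_on_strip ga /\
    (forall u a, 0 <= a <= 1 -> is_derive (fun v => g v a) u (gu u a)) /\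
    (forall u a, 0 <= a <= 1 ->
       forall eps, 0 < eps -> exists delta, 0 < delta /\
         forall a', 0 <= a' <= 1 -> Rabs (a' - a) < delta ->
           Rabs (g u a' - g u a - ga u a * (a' - a)) <= eps * Rabs (a' - a)).

Definition gprime (g : R -> R -> R) (u a : R) : R := Derive (fun v => g v a) u.

Definition Hg (g : R -> R -> R) : Prop :=
  C1_strip g /\
  forall a, 0 < a < 1 ->
    g 0 a = 0 /\ g a a = 0 /\ g 1 a = 0 /\
    gprime g 0 a < 0 /\ gprime g 1 a < 0 /\ gprime g a a > 0 /\
    (forall v, (v < 0 \/ (a < v < 1)) -> g v a > 0) /\
    (forall v, ((0 < v < a) \/ 1 < v) -> g v a < 0).

Definition d_diamond (g : R -> R -> R) (k A a : R) : Rbar :=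
  Glb_Rbar (fun d => 0 < d /\
    forall v, 0 <= v <= A -> d * (k + 1) * (A - v) - g A a >= - g v a).

Definition in_Dminus (g : R -> R -> R) (k a d : R) : Prop :=
  (0 < a < 1 /\ 0 < d) /\
  exists A, a < A < 1 /\ Rbar_lt (d_diamond g k A a) (Finite d) /\ d < g A a / A.

(* max_{v in [0,A]} (d(k+1)v - dkA - g(v;a)), written as the supremum of the
   values (it is attained since the function is continuous on [0,A]). *)
Definition max_expr (g : R -> R -> R) (k a d A : R) : Rbar :=
  Lub_Rbar (fun y => exists v, 0 <= v <= A /\
    y = d * (k + 1) * v - d * k * A - g v a).

(* Main.v *)
Require Import Defs.
From Stdlib Require Import Reals.
From Coquelicot Require Import Coquelicot.
From Stdlib Require Import Lra Classical.
Open Scope R_scope.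

Lemma cont_ed (f : R -> R) x : (forall y, ex_derive f y) -> forall eps, 0 < eps -> exists del, 0 < del /\ forall y, Rabs (y - x) < del -> Rabs (f y - f x) < eps.
Proof.
intros Hd eps He.
assert (Hc := @ex_derive_continuous R_AbsRing R_NormedModule f x (Hd x)).
destruct (proj1 (filterlim_locally f (f x)) Hc (mkposreal eps He)) as [del Hdel].
exists del. split. apply cond_pos. intros y Hy. apply (Hdel y). exact Hy.
Qed.

Lemma first_hit (H : R -> R) (A mu : R) :
  (forall x eps, 0 < eps -> exists del, 0 < del /\ forall y, Rabs (y - x) < del -> Rabs (H y - H x) < eps) ->
  A < 1 -> H A >= mu -> H 1 < mu ->
  exists A', A <= A' < 1 /\ H A' = mu /\ forall v, A <= v <= A' -> H v >= mu.
Proof.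
intros Hc HA1 HA H1.
set (E := fun B => A <= B <= 1 /\ forall x, A <= x <= B -> H x >= mu).
assert (Eb : bound E). { exists 1. intros B [HB _]. lra. }
assert (Ee : exists x, E x). { exists A. split. lra. intros x Hx. replace x with A by lra. exact HA. }
destruct (completeness E Eb Ee) as [m [Hub Hl]].
assert (HAm : A <= m). { apply Hub. unfold E. split. lra. intros x Hx. replace x with A by lra. exact HA. }
assert (Hm1 : m <= 1). { apply Hl. intros B [HB _]. lra. }
assert (C1 : forall x, A <= x < m -> H x >= mu).
{ intros x Hx. destruct (classic (exists B, E B /\ x < B)) as [[B [[_ HB] HxB]]|Hn].
  - apply HB. lra.
  - exfalso. assert (m <= x). { apply Hl. intros B HB. destruct (Rle_dec B x). exact r. exfalso. apply Hn. exists B. split. exact HB. lra. } lra. }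
assert (C2 : H m >= mu).
{ destruct (Rge_dec (H m) mu) as [r|r]. exact r. exfalso.
  destruct (Hc m (mu - H m)) as [del [Hdel Hd]]. lra.
  destruct (Req_dec m A) as [e|ne]. { subst. lra. }
  set (x := Rmax A (m - del/2)).
  assert (A <= x < m). { unfold x. unfold Rmax. destruct (Rle_dec A (m - del/2)); lra. }
  assert (Rabs (x - m) < del). { unfold x, Rmax. destruct (Rle_dec A (m - del/2)); apply Rabs_def1; lra. }
  specialize (Hd x H2). specialize (C1 x H0). apply Rabs_def2 in Hd. lra. }
assert (C3 : m < 1). { destruct (Req_dec m 1). subst. lra. lra. }
assert (C4 : H m <= mu).
{ destruct (Rle_dec (H m) mu) as [r|r]. exact r. exfalso.
  destruct (Hc m (H m - mu)) as [del [Hdel Hd]]. lra.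
  set (B := Rmin 1 (m + del/2)).
  assert (m < B <= 1). { unfold B, Rmin. destruct (Rle_dec 1 (m + del/2)); lra. }
  assert (E B). { split. lra. intros x Hx. destruct (Rlt_dec x m). apply C1; lra.
     assert (Rabs (x - m) < del). { apply Rabs_def1; unfold B, Rmin in Hx; destruct (Rle_dec 1 (m + del/2)); lra. }
     specialize (Hd x H2). apply Rabs_def2 in Hd. lra. }
  specialize (Hub B H2). lra. }
exists m. split. lra. split. lra. intros v Hv. destruct (Rlt_dec v m). apply C1; lra. replace v with m by lra. exact C2.
Qed.

Theorem proposition5p2 (g : R -> R -> R) (k a d : R) :
  Hg g -> 0 < k -> (0 < a < 1 /\ 0 < d) ->
  (in_Dminus g k a d <->
   exists A, a < A < 1 /\ Rbar_lt (max_expr g k a d A) (Finite 0)).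
Proof.
intros [HC Hga] Hk [Ha Hd].
destruct (Hga a Ha) as [g0 [ga [g1 _]]].
destruct HC as [gu [ga' [_ [_ [Hder _]]]]].
assert (Hex : forall y, ex_derive (fun v => g v a) y).
{ intros y. exists (gu y a). apply Hder. lra. }
split.
- intros [_ [A [HA [Hglb Hlt]]]].
  assert (HgA : d * A < g A a).
  { assert (0 < A) by lra. apply Rmult_lt_compat_r with (r := A) in Hlt; [|lra].
    replace (g A a / A * A) with (g A a) in Hlt by (field; lra). exact Hlt. }
  set (S := fun d0 => 0 < d0 /\ forall v, 0 <= v <= A -> d0 * (k + 1) * (A - v) - g A a >= - g v a).
  assert (Hex2 : exists d', S d' /\ d' < d).
  { destruct (classic (exists d', S d' /\ d' < d)) as [h|h]. exact h. exfalso.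
    destruct (Glb_Rbar_correct S) as [_ Hgl].
    assert (Rbar_le d (Glb_Rbar S)).
    { apply Hgl. intros x Hx. simpl. destruct (Rle_dec d x). exact r. exfalso. apply h. exists x. split. exact Hx. lra. }
    unfold d_diamond in Hglb. fold S in Hglb.
    destruct (Glb_Rbar S); simpl in *; lra. }
  destruct Hex2 as [d' [[Hd' Hs] Hdd]].
  exists A. split. exact HA.
  apply Rbar_le_lt_trans with (y := Finite (d * A - g A a)); [| simpl; lra].
  destruct (Lub_Rbar_correct (fun y => exists v, 0 <= v <= A /\ y = d * (k + 1) * v - d * k * A - g v a)) as [_ Hl].
  apply Hl. intros y [v [Hv ->]]. simpl. specialize (Hs v Hv).
  assert (0 <= (d - d') * (k + 1) * (A - v)). { apply Rmult_le_pos. apply Rmult_le_pos; lra. lra. }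
  lra.
- intros [A [HA Hmax]].
  set (S := fun y => exists v, 0 <= v <= A /\ y = d * (k + 1) * v - d * k * A - g v a).
  destruct (Lub_Rbar_correct S) as [Hub _].
  unfold max_expr in Hmax. fold S in Hmax.
  assert (S0 : S (d * (k + 1) * 0 - d * k * A - g 0 a)). { exists 0. split. lra. reflexivity. }
  assert (Hm : exists m, m < 0 /\ forall v, 0 <= v <= A -> d * (k + 1) * v - d * k * A - g v a <= m).
  { destruct (Lub_Rbar S) as [m| |] eqn:E; simpl in Hmax; try contradiction.
    - exists m. split. exact Hmax. intros v Hv. apply (Hub _ (ex_intro _ v (conj Hv eq_refl))).
    - specialize (Hub _ S0). simpl in Hub. contradiction. }
  destruct Hm as [m [Hm0 Hmv]].
  assert (HmA : - m <= d * k * A).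
  { specialize (Hmv 0). rewrite g0 in Hmv. assert (0 <= 0 <= A) by lra. specialize (Hmv H). lra. }
  set (dd := d + m / (2 * (k + 1))).
  assert (Hddk : dd * (k + 1) = d * (k + 1) + m / 2). { unfold dd. field. lra. }
  set (mu := - d * k * A - m).
  set (H := fun v => g v a - dd * (k + 1) * v).
  assert (Hc : forall x eps, 0 < eps -> exists del, 0 < del /\ forall y, Rabs (y - x) < del -> Rabs (H y - H x) < eps).
  { intros x. apply cont_ed. intros y. unfold H. auto_derive. apply Hex. }
  assert (Hlow : forall v, 0 <= v <= A -> H v >= mu).
  { intros v Hv. specialize (Hmv v Hv). unfold H, mu. rewrite Hddk.
    assert (0 <= - m / 2 * v). { apply Rmult_le_pos; lra. } lra. }
  assert (H1 : H 1 < mu). { unfold H, mu. rewrite g1. rewrite Hddk. assert (d * k * A < d * k * 1). { apply Rmult_lt_compat_l. apply Rmult_lt_0_compat; lra. lra. } lra. }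
  destruct (first_hit H A mu Hc ltac:(lra) (Hlow A ltac:(lra)) H1) as [A' [HA' [HA'mu HA'v]]].
  split. split; lra.
  exists A'. split. lra. split.
  + assert (Sdd : 0 < dd /\ forall v, 0 <= v <= A' -> dd * (k + 1) * (A' - v) - g A' a >= - g v a).
    { split.
      - assert (0 < dd * (k + 1)). { rewrite Hddk. assert (d * k * A < d * k * 1). { apply Rmult_lt_compat_l. apply Rmult_lt_0_compat; lra. lra. } nra. }
        apply (Rmult_lt_reg_r (k + 1)). lra. lra.
      - intros v Hv. assert (H v >= H A').
        { rewrite HA'mu. destruct (Rle_dec v A). apply Hlow. lra. apply HA'v. lra. }
        unfold H in H0. lra. }
    assert (dd < d). { unfold dd. assert (m / (2 * (k + 1)) < 0). { apply Rdiv_neg_pos; lra. } lra. }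
    destruct (Glb_Rbar_correct (fun d0 => 0 < d0 /\ forall v, 0 <= v <= A' -> d0 * (k + 1) * (A' - v) - g A' a >= - g v a)) as [Hlb _].
    specialize (Hlb dd Sdd). unfold d_diamond.
    apply Rbar_le_lt_trans with (y := Finite dd). exact Hlb. simpl. lra.
  + assert (HgA : d * A' < g A' a).
    { unfold H, mu in HA'mu. rewrite Hddk in HA'mu.
      assert (d * k * A <= d * k * A'). { apply Rmult_le_compat_l. apply Rmult_le_pos; lra. lra. }
      assert (m / 2 * A' > m). { assert (m / 2 * A' >= m / 2 * 1). { apply Rmult_le_ge_compat_neg_l. lra. lra. } lra. }
      lra. }
    apply (Rmult_lt_reg_r A'). lra. replace (g A' a / A' * A') with (g A' a) by (field; lra). exact HgA.
Qed.
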